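(* Let $f:\mathbb{P}^2\to\mathbb{P}^2$ be a holomorphic map and $\ell\subset\mathbb{P}^2$ a line with $f(\ell)\subset\ell$. Suppose that the fixed points $p_1,\dots,p_k$ of $f|_\ell$ are all simple. Let $\lambda_i,\mu_i$ be the eigenvalues of $Df|_{p_i}$, with $\lambda_i$ the eigenvalue tangent to $\ell$ (i.e. $\lambda_i=(f|_\ell)'(p_i)$). Then $$\sum_{i=1}^k\frac{1-\mu_i}{1-\lambda_i}=1.$$
   Context: A fixed point $p$ of $f|_\ell:\ell\to\ell$ is simple if $(f|_\ell)'(p)\neq1$. Since $\ell$ is invariant, $T_p\ell$ is an invariant subspace of $Df|_p$, so the eigenvalue $\lambda_i$ along $\ell$ and the other eigenvalue $\mu_i$ are well defined. *)

(* Defs.v *)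
(* Holomorphic self-maps of P^2 over an algebraically closed
   field of characteristic 0 with a norm (numClosedFieldType; C is the
   intended instance), in homogeneous coordinates. *)
From HB Require Import structures.
From mathcomp Require Import all_boot all_order all_algebra.
Set Implicit Arguments. Unset Strict Implicit. Unset Printing Implicit Defensive.
Import Order.TTheory GRing.Theory Num.Theory.
Local Open Scope ring_scope.

Section P2.
Variable R : numClosedFieldType.

Definition cX (v : 'cV[R]_3) : R := v (inord 0) ord0.
Definition cY (v : 'cV[R]_3) : R := v (inord 1) ord0.
Definition cZ (v : 'cV[R]_3) : R := v (inord 2) ord0.

(* A homogeneous polynomial of degree d in X,Y,Z is given by its coefficients
   c a b of the monomials X^a Y^b Z^(d-a-b), a + b <= d. *)
Definition heval (d : nat) (c : nat -> nat -> R) (v : 'cV[R]_3) : R :=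
  \sum_(a < d.+1) \sum_(b < (d - a).+1)
     c a b * cX v ^+ a * cY v ^+ b * cZ v ^+ (d - a - b).

Definition dmon (j : 'I_3) (a b e : nat) (v : 'cV[R]_3) : R :=
  match nat_of_ord j with
  | 0 => a%:R * cX v ^+ a.-1 * cY v ^+ b * cZ v ^+ e
  | 1 => cX v ^+ a * (b%:R * cY v ^+ b.-1) * cZ v ^+ e
  | _ => cX v ^+ a * cY v ^+ b * (e%:R * cZ v ^+ e.-1)
  end.

Definition hpart (d : nat) (c : nat -> nat -> R) (j : 'I_3) (v : 'cV[R]_3) : R :=
  \sum_(a < d.+1) \sum_(b < (d - a).+1) c a b * dmon j a b (d - a - b) v.

Definition Fmap (d : nat) (F : 'I_3 -> nat -> nat -> R) (v : 'cV[R]_3) : 'cV[R]_3 :=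
  \col_i heval d (F i) v.
Definition Jac (d : nat) (F : 'I_3 -> nat -> nat -> R) (v : 'cV[R]_3) : 'M[R]_3 :=
  \matrix_(i, j) hpart d (F i) j v.

(* F defines a holomorphic map P^2 -> P^2: no common zero besides 0 *)
Definition holo_map d F : Prop := forall v, Fmap d F v = 0 -> v = 0.

(* the line l = {[v] | a v = 0}, a a nonzero linear form *)
Definition lform (a : 'rV[R]_3) (v : 'cV[R]_3) : R := (a *m v) ord0 ord0.

Definition line_invariant d F (a : 'rV[R]_3) : Prop :=
  forall v, v != 0 -> lform a v = 0 -> lform a (Fmap d F v) = 0.

Definition is_fixed d F (v : 'cV[R]_3) : Prop := exists c : R, Fmap d F v = c *: v.

Definition proportional (u v : 'cV[R]_3) : Prop := exists c : R, u = c *: v.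

(* Differential of f at a fixed point [p] with F(p) = c p: Df_p is the map
   induced by M := c^-1 * DF(p) on T_p P^2 = R^3 / R p (M p = d p by Euler).
   lam, mu are the eigenvalues of Df_p (the roots of its characteristic
   polynomial, with multiplicity), lam being the eigenvalue on T_p l = L / R p,
   L = ker a. *)
Definition Df_eigenvalues d F (a : 'rV[R]_3) (p : 'cV[R]_3) (lam mu : R) : Prop :=
  exists c : R, c != 0 /\ Fmap d F p = c *: p /\
    let M := c^-1 *: Jac d F p in
    char_poly M = ('X - (d%:R)%:P) * ('X - lam%:P) * ('X - mu%:P) /\
    exists w : 'cV[R]_3, lform a w = 0 /\ ~ proportional w p /\
      exists t : R, M *m w = lam *: w + t *: p.

End P2.

(* Main.v *)
From Stdlib Require Import ClassicalEpsilon Classical.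
Require Import Defs.
From HB Require Import structures.
From mathcomp Require Import all_boot all_order all_algebra.
From mathcomp Require Import ring zify.
Import Order.TTheory GRing.Theory Num.Theory.
Local Open Scope ring_scope.

Lemma deriv_root2 (R : comNzRingType) (a : R) (h : {poly R}) :
  (('X - a%:P) * (('X - a%:P) * h))^`().[a] = 0.
Proof.
rewrite !derivM !derivXsubC !hornerE /=.
by rewrite subrr !(mul0r, mulr0, add0r, addr0).
Qed.

Lemma deriv_root1 (R : comNzRingType) (a : R) (h : {poly R}) :
  (('X - a%:P) * h)^`().[a] = h.[a].
Proof.
rewrite !derivM !derivXsubC !hornerE /=.
by rewrite subrr !(mul0r, mulr0, add0r, addr0, mul1r).
Qed.

Lemma lagrange (R : closedFieldType) (n k : nat) (phi P : {poly R})
   (r : 'I_k -> R) :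
  size phi = n.+2 -> injective r ->
  (forall z, root phi z -> exists i, z = r i) ->
  (forall i, root phi (r i)) ->
  (forall i, phi^`().[r i] != 0) ->
  (size P <= n.+1)%N ->
  k = n.+1 /\ \sum_(i < k) P.[r i] / phi^`().[r i] = P`_n / phi`_n.+1.
Proof.
move=> sphi rinj rootsin rootr dnz sP.
have phinz : phi != 0 by rewrite -size_poly_eq0 sphi.
set rs := map r (enum 'I_k).
have urs : uniq rs by rewrite map_inj_uniq // enum_uniq.
have srs : size rs = k by rewrite size_map size_enum_ord.
have ars : all (root phi) rs by apply/allP => z /mapP [i _ ->].
pose psi := \prod_(i < k) ('X - (r i)%:P).
have psiE : psi = \prod_(z <- rs) ('X - z%:P).
  by rewrite /psi big_map big_enum.
have dvd : psi %| phi by rewrite psiE uniq_roots_dvdp // uniq_rootsE.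
set s := phi %/ psi.
have phiE : phi = s * psi by rewrite divpK.
have psimon : psi \is monic by rewrite psiE monic_prod_XsubC.
have spsi : size psi = k.+1 by rewrite psiE size_prod_XsubC srs.
have ss1 : size s = 1%N.
  apply/eqP; apply: contraT => /closed_rootP [z rz].
  have : root phi z by rewrite phiE rootM rz.
  move=> /rootsin [j zj].
  have /factor_theorem [s' s'E] := rz.
  have psiD : psi = ('X - (r j)%:P) * \prod_(i < k | i != j) ('X - (r i)%:P).
    by rewrite /psi (bigD1 j).
  have := dnz j.
  rewrite phiE s'E psiD zj.
  have -> : s' * ('X - (r j)%:P) * (('X - (r j)%:P) *
     \prod_(i < k | i != j) ('X - (r i)%:P)) =
     ('X - (r j)%:P) * (('X - (r j)%:P) *
     (s' * \prod_(i < k | i != j) ('X - (r i)%:P))) by ring.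
  by rewrite deriv_root2 eqxx.
have [c [cnz sE]] : exists c, c != 0 /\ s = c%:P.
  by have [c cnz ->] := size_poly1P _ (introT eqP ss1); exists c.
have phiC : phi = c *: psi by rewrite phiE sE mul_polyC.
have kn : k = n.+1.
  by apply/eqP; rewrite -eqSS -spsi -sphi phiC size_scale.
split=> //.
have lead : phi`_n.+1 = c.
  rewrite phiC coefZ -kn.
  by have /monicP := psimon; rewrite /lead_coef spsi /= => ->; rewrite mulr1.
pose q i := c *: \prod_(j < k | j != i) ('X - (r j)%:P).
have phiq : forall i, phi = ('X - (r i)%:P) * q i.
  by move=> i; rewrite phiC /q -scalerAr /psi (bigD1 i).
have qii : forall i, (q i).[r i] = phi^`().[r i].
  by move=> i; rewrite (phiq i) deriv_root1.
have qij : forall i j, i != j -> (q i).[r j] = 0.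
  move=> i j ij; rewrite /q hornerZ horner_prod (bigD1 j) /=; last by rewrite eq_sym.
  by rewrite !hornerE subrr /= mulr0 mul0r.
have sm : forall i, size (\prod_(j < k | j != i) ('X - (r j)%:P)) = n.+1.
  move=> i; have := sphi; rewrite (phiq i) /q -scalerAr size_scale //.
  rewrite size_mul ?polyXsubC_eq0 ?monic_neq0 ?monic_prod_XsubC // size_XsubC /=.
  by case.
have qn : forall i, (q i)`_n = c.
  move=> i.
  have m : \prod_(j < k | j != i) ('X - (r j)%:P) \is monic by apply: monic_prod_XsubC.
  rewrite /q coefZ.
  by have /monicP := m; rewrite /lead_coef sm /= => ->; rewrite mulr1.
pose Q := \sum_(i < k) (P.[r i] / phi^`().[r i]) *: q i.
have sq : forall i, (size (q i) <= n.+1)%N.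
  move=> i; rewrite /q (leq_trans (size_scale_leq _ _)) //.
  by rewrite sm.
have sQ : (size (Q - P)%R <= n.+1)%N.
  rewrite (leq_trans (size_polyD _ _)) // geq_max size_polyN sP andbT.
  rewrite /Q; apply: (big_ind (fun p : {poly R} => (size p <= n.+1)%N)) => //.
  - by rewrite size_poly0.
  - by move=> x y hx hy; rewrite (leq_trans (size_polyD _ _)) // geq_max hx hy.
  - by move=> i _; rewrite (leq_trans (size_scale_leq _ _)).
have QP : Q - P = 0.
  apply/eqP; apply: contraT => nz.
  suff allr : all (root (Q - P)) rs.
    by have := max_poly_roots nz allr urs; rewrite srs kn ltnNge sQ.
  apply/allP => z /mapP [j _ ->].
  rewrite /root hornerD hornerN /Q horner_sum (bigD1 j) //= big1.
    by rewrite addr0 hornerZ qii mulfVK // subrr.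
  by move=> i ij; rewrite hornerZ qij ?mulr0.
have := congr1 (fun p : {poly R} => p`_n) QP.
rewrite coefB coef0 /Q coef_sum => /eqP; rewrite subr_eq0 => /eqP.
under eq_bigr do rewrite coefZ qn.
rewrite -mulr_suml lead => <-.
by rewrite mulfK.
Qed.

Arguments lagrange [R n k phi P r].


Lemma coefM_top (R : comNzRingType) (p q : {poly R}) (m n : nat) :
  (size p <= m.+1)%N -> (size q <= n.+1)%N ->
  (size (p * q)%R <= (m + n).+1)%N /\ (p * q)`_(m + n) = p`_m * q`_n.
Proof.
move=> sp sq; split.
  by rewrite (leq_trans (size_mul_leq _ _)) //; move: sp sq; lia.
rewrite coefM (bigD1 (Ordinal (leq_addr n m.+1 : (m < (m + n).+1)%N))) //=.
rewrite big1 ?addr0; first by rewrite addKn.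
move=> [i hi] /= /negbTE ne.
have : i != m by apply: contraFN ne => /eqP ei; apply/eqP/val_inj.
rewrite neq_ltn => /orP [lt | gt].
  rewrite [q`__]nth_default ?mulr0 //.
  rewrite (leq_trans sq) // ltn_subRL. 
  by rewrite -addSn ltn_add2r.
by rewrite nth_default ?mul0r // (leq_trans sp).
Qed.
Arguments coefM_top [R p q m n].

Lemma exp_top (R : comNzRingType) (p : {poly R}) (n : nat) :
  (size p <= 2)%N -> (size (p ^+ n)%R <= n.+1)%N /\ (p ^+ n)`_n = p`_1 ^+ n.
Proof.
move=> sp; elim: n => [|n [IHs IHc]].
  by rewrite !expr0 size_poly1 coefC.
have [s c] := coefM_top IHs (sp : (size p <= 1.+1)%N).
by rewrite exprSr addn1 in s c *; rewrite s c IHc exprSr.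
Qed.
Arguments exp_top [R p].


Section S.
Variable R : numClosedFieldType.

Definition i0 : 'I_3 := inord 0.
Definition i1 : 'I_3 := inord 1.
Definition i2 : 'I_3 := inord 2.

Lemma ord3 (i : 'I_3) : i = i0 \/ i = i1 \/ i = i2.
Proof.
case: i => [[|[|[|m]]] hm].
- by left; apply/val_inj; rewrite /= inordK.
- by right; left; apply/val_inj; rewrite /= inordK.
- by right; right; apply/val_inj; rewrite /= inordK.
- by [].
Qed.

Lemma sum3 (f : 'I_3 -> R) : \sum_(j < 3) f j = f i0 + f i1 + f i2.
Proof.
rewrite !big_ord_recr big_ord0 /= add0r.
congr (f _ + f _ + f _); apply/val_inj; by rewrite /= inordK.
Qed.

Lemma col3P (u v : 'cV[R]_3) :
  cX u = cX v -> cY u = cY v -> cZ u = cZ v -> u = v.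
Proof.
move=> hx hy hz; apply/matrixP => i j; rewrite (ord1 j).
by case: (ord3 i) => [->|[->|->]].
Qed.

Lemma cXD (u v : 'cV[R]_3) : cX (u + v) = cX u + cX v. Proof. by rewrite /cX mxE. Qed.
Lemma cYD (u v : 'cV[R]_3) : cY (u + v) = cY u + cY v. Proof. by rewrite /cY mxE. Qed.
Lemma cZD (u v : 'cV[R]_3) : cZ (u + v) = cZ u + cZ v. Proof. by rewrite /cZ mxE. Qed.
Lemma cXZ x (v : 'cV[R]_3) : cX (x *: v) = x * cX v. Proof. by rewrite /cX mxE. Qed.
Lemma cYZ x (v : 'cV[R]_3) : cY (x *: v) = x * cY v. Proof. by rewrite /cY mxE. Qed.
Lemma cZZ x (v : 'cV[R]_3) : cZ (x *: v) = x * cZ v. Proof. by rewrite /cZ mxE. Qed.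

Definition coordE := (cXD, cYD, cZD, cXZ, cYZ, cZZ).

Lemma lformE (a : 'rV[R]_3) v :
  lform a v = a ord0 i0 * cX v + a ord0 i1 * cY v + a ord0 i2 * cZ v.
Proof. by rewrite /lform mxE sum3. Qed.

Lemma lformD a (u v : 'cV[R]_3) : lform a (u + v) = lform a u + lform a v.
Proof. rewrite !lformE !coordE; ring. Qed.
Lemma lformZ a x (v : 'cV[R]_3) : lform a (x *: v) = x * lform a v.
Proof. rewrite !lformE !coordE; ring. Qed.
Lemma lform0 a : lform a (0 : 'cV[R]_3) = 0.
Proof. by rewrite -(scale0r 0) lformZ mul0r. Qed.



Lemma hpart0 d c (v : 'cV[R]_3) : hpart d c i0 v = \sum_(a < d.+1) \sum_(b < (d - a).+1)
  c a b * (a%:R * cX v ^+ a.-1 * cY v ^+ b * cZ v ^+ (d - a - b)).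
Proof. by rewrite /hpart /dmon /i0 inordK. Qed.
Lemma hpart1 d c (v : 'cV[R]_3) : hpart d c i1 v = \sum_(a < d.+1) \sum_(b < (d - a).+1)
  c a b * (cX v ^+ a * (b%:R * cY v ^+ b.-1) * cZ v ^+ (d - a - b)).
Proof. by rewrite /hpart /dmon /i1 inordK. Qed.
Lemma hpart2 d c (v : 'cV[R]_3) : hpart d c i2 v = \sum_(a < d.+1) \sum_(b < (d - a).+1)
  c a b * (cX v ^+ a * cY v ^+ b * ((d - a - b)%:R * cZ v ^+ (d - a - b).-1)).
Proof. by rewrite /hpart /dmon /i2 inordK. Qed.

Lemma hxn (n : nat) (x : R) : x * (n%:R * x ^+ n.-1) = n%:R * x ^+ n.
Proof. by case: n => [|n]; rewrite ?mul0r ?mulr0 //= exprS; ring. Qed.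

Lemma hgn (n : nat) (g x : R) : n%:R * (g * x) ^+ n.-1 * g = g ^+ n * (n%:R * x ^+ n.-1).
Proof. by case: n => [|n]; rewrite ?mul0r ?mulr0 //= exprMn exprS; ring. Qed.

Lemma euler d c (v : 'cV[R]_3) :
  cX v * hpart d c i0 v + cY v * hpart d c i1 v + cZ v * hpart d c i2 v =
  d%:R * heval d c v.
Proof.
rewrite hpart0 hpart1 hpart2 /heval !mulr_sumr -!big_split; apply: eq_bigr => a _.
rewrite !mulr_sumr -!big_split; apply: eq_bigr => b _ /=.
case: a b => [a ha] [b hb] /=; simpl in hb.
have e : (d = a + b + (d - a - b))%N by move: ha hb; lia.
set X := cX v; set Y := cY v; set Z := cZ v; set k := (d - a - b)%N.
transitivity (c a b * Y ^+ b * Z ^+ k * (X * (a%:R * X ^+ a.-1)) +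
  c a b * X ^+ a * Z ^+ k * (Y * (b%:R * Y ^+ b.-1)) +
  c a b * X ^+ a * Y ^+ b * (Z * (k%:R * Z ^+ k.-1))); first ring.
rewrite !hxn [in d%:R]e !natrD -/k; ring.
Qed.

Lemma heval_scale d c g (v : 'cV[R]_3) : heval d c (g *: v) = g ^+ d * heval d c v.
Proof.
rewrite /heval mulr_sumr; apply: eq_bigr => a _.
rewrite mulr_sumr; apply: eq_bigr => b _.
case: a b => [a ha] [b hb] /=; simpl in hb.
have e : (d = a + b + (d - a - b))%N by move: ha hb; lia.
rewrite !coordE !exprMn [in g ^+ d]e !exprD; ring.
Qed.

Lemma hpart_scale d c j g (v : 'cV[R]_3) :
  hpart d c j (g *: v) * g = g ^+ d * hpart d c j v.
Proof.
case: (ord3 j) => [->|[->|->]];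
  rewrite ?hpart0 ?hpart1 ?hpart2 mulr_suml mulr_sumr; apply: eq_bigr => a _;
  rewrite mulr_suml mulr_sumr; apply: eq_bigr => b _;
  case: a b => [a ha] [b hb] /=; simpl in hb;
  (have e : (d = a + b + (d - a - b))%N by move: ha hb; lia);
  rewrite !coordE; set k := (d - a - b)%N.
- transitivity (c a b * (g * cY v) ^+ b * (g * cZ v) ^+ k *
     (a%:R * (g * cX v) ^+ a.-1 * g)); first ring.
  rewrite hgn !exprMn [in g ^+ d]e !exprD -/k; ring.
- transitivity (c a b * (g * cX v) ^+ a * (g * cZ v) ^+ k *
     (b%:R * (g * cY v) ^+ b.-1 * g)); first ring.
  rewrite hgn !exprMn [in g ^+ d]e !exprD -/k; ring.
- transitivity (c a b * (g * cX v) ^+ a * (g * cY v) ^+ b *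
     (k%:R * (g * cZ v) ^+ k.-1 * g)); first ring.
  rewrite hgn !exprMn [in g ^+ d]e !exprD -/k; ring.
Qed.

Section Poly.
Variables (u w : 'cV[R]_3).

Definition lin (i : 'I_3) : {poly R} := (u i ord0)%:P + (w i ord0)%:P * 'X.
Definition vx (x : R) : 'cV[R]_3 := u + x *: w.

Definition HP d (c : nat -> nat -> R) : {poly R} :=
  \sum_(a < d.+1) \sum_(b < (d - a).+1)
     (c a b)%:P * lin i0 ^+ a * lin i1 ^+ b * lin i2 ^+ (d - a - b).

Definition dmonP (j : 'I_3) (a b e : nat) : {poly R} :=
  match nat_of_ord j with
  | 0 => a%:R * lin i0 ^+ a.-1 * lin i1 ^+ b * lin i2 ^+ e
  | 1 => lin i0 ^+ a * (b%:R * lin i1 ^+ b.-1) * lin i2 ^+ e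
  | _ => lin i0 ^+ a * lin i1 ^+ b * (e%:R * lin i2 ^+ e.-1)
  end.

Definition DP d (c : nat -> nat -> R) (j : 'I_3) : {poly R} :=
  \sum_(a < d.+1) \sum_(b < (d - a).+1) (c a b)%:P * dmonP j a b (d - a - b).

Lemma lin0 x : (lin i0).[x] = cX (vx x).
Proof. by rewrite /lin /vx !hornerE /cX !mxE mulrC. Qed.
Lemma lin1 x : (lin i1).[x] = cY (vx x).
Proof. by rewrite /lin /vx !hornerE /cY !mxE mulrC. Qed.
Lemma lin2 x : (lin i2).[x] = cZ (vx x).
Proof. by rewrite /lin /vx !hornerE /cZ !mxE mulrC. Qed.

Lemma HP_horner d c x : (HP d c).[x] = heval d c (vx x).
Proof.
rewrite /HP /heval horner_sum; apply: eq_bigr => a _.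
rewrite horner_sum; apply: eq_bigr => b _.
by rewrite !hornerM !horner_exp hornerC lin0 lin1 lin2.
Qed.

Lemma hornerNat n x : (n%:R : {poly R}).[x] = n%:R.
Proof. by rewrite -[n%:R]/(1 *+ n) hornerMn hornerC. Qed.

Lemma DP_horner d c j x : (DP d c j).[x] = hpart d c j (vx x).
Proof.
rewrite /DP /hpart horner_sum; apply: eq_bigr => a _.
rewrite horner_sum; apply: eq_bigr => b _.
rewrite hornerM hornerC /dmonP /dmon.
by case: (nat_of_ord j) => [|[|m]];
  rewrite !hornerM !horner_exp hornerNat lin0 lin1 lin2.
Qed.


Lemma lin_top i : (size (lin i) <= 2)%N /\ (lin i)`_1 = w i ord0.
Proof.
split; last by rewrite /lin coefD coefC mul_polyC coefZ coefX /= add0r mulr1.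
rewrite /lin (leq_trans (size_polyD _ _)) // geq_max.
rewrite (leq_trans (size_polyC_leq1 _)) //= mul_polyC.
by rewrite (leq_trans (size_scale_leq _ _)) // size_polyX.
Qed.

Lemma linx_top i n : (size (lin i ^+ n)%R <= n.+1)%N /\ (lin i ^+ n)`_n = w i ord0 ^+ n.
Proof. by have [s c] := lin_top i; have [s' c'] := exp_top n s; rewrite c in c'. Qed.

Lemma C_top (x : R) : (size x%:P <= 0.+1)%N /\ x%:P`_0 = x.
Proof. by rewrite size_polyC_leq1 coefC. Qed.

Lemma term_top (x : R) a b e :
  (size (x%:P * lin i0 ^+ a * lin i1 ^+ b * lin i2 ^+ e)%R <= (a + b + e).+1)%N /\
  (x%:P * lin i0 ^+ a * lin i1 ^+ b * lin i2 ^+ e)`_(a + b + e) =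
    x * w i0 ord0 ^+ a * w i1 ord0 ^+ b * w i2 ord0 ^+ e.
Proof.
have [s1 c1] := C_top x.
have [s2 c2] := linx_top i0 a.
have [s3 c3] := linx_top i1 b.
have [s4 c4] := linx_top i2 e.
have [t1 d1] := coefM_top s1 s2.
have [t2 d2] := coefM_top t1 s3.
have [t3 d3] := coefM_top t2 s4.
rewrite !add0n in t3 d3 d2 d1.
by rewrite t3 d3 d2 d1 c1 c2 c3 c4.
Qed.

Lemma HP_top d c : (size (HP d c) <= d.+1)%N /\ (HP d c)`_d = heval d c w.
Proof.
have key : forall (a : 'I_d.+1) (b : 'I_(d - a).+1),
   (size ((c a b)%:P * lin i0 ^+ a * lin i1 ^+ b * lin i2 ^+ (d - a - b))%R <= d.+1)%N /\
   ((c a b)%:P * lin i0 ^+ a * lin i1 ^+ b * lin i2 ^+ (d - a - b))`_d =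
    c a b * cX w ^+ a * cY w ^+ b * cZ w ^+ (d - a - b).
  move=> [a ha] [b hb] /=; simpl in hb.
  have e : (a + b + (d - a - b) = d)%N by move: ha hb; lia.
  by have := term_top (c a b) a b (d - a - b); rewrite e.
split.
  rewrite /HP; apply: (big_ind (fun p : {poly R} => (size p <= d.+1)%N)).
  - by rewrite size_poly0.
  - by move=> x y hx hy; rewrite (leq_trans (size_polyD _ _)) // geq_max hx hy.
  move=> a _; apply: (big_ind (fun p : {poly R} => (size p <= d.+1)%N)).
  - by rewrite size_poly0.
  - by move=> x y hx hy; rewrite (leq_trans (size_polyD _ _)) // geq_max hx hy.
  by move=> b _; case: (key a b).
rewrite /HP /heval coef_sum; apply: eq_bigr => a _.
rewrite coef_sum; apply: eq_bigr => b _.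
by case: (key a b).
Qed.

Lemma dmon_size j (a b e : nat) :
  (size (dmonP j a b e) <= a + b + e)%N.
Proof.
have [s1 _] := C_top 1.
have natE : forall n : nat, (n%:R : {poly R}) = (n%:R : R)%:P by move=> n; rewrite polyC_natr.
rewrite /dmonP; case: (nat_of_ord j) => [|[|m]].
- case: a => [|a]; first by rewrite mul0r !mul0r size_poly0.
  have [s0 _] := C_top (a.+1%:R).
  have [s2 _] := linx_top i0 a; have [s3 _] := linx_top i1 b; have [s4 _] := linx_top i2 e.
  have [t1 _] := coefM_top s0 s2; have [t2 _] := coefM_top t1 s3.
  have [t3 _] := coefM_top t2 s4.
  by rewrite natE /=; move: t3; rewrite !add0n addSn.
- case: b => [|b]; first by rewrite mul0r mulr0 !mul0r size_poly0.
  have [s0 _] := C_top (b.+1%:R).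
  have [s2 _] := linx_top i0 a; have [s3 _] := linx_top i1 b; have [s4 _] := linx_top i2 e.
  have [t1 _] := coefM_top s0 s3; have [t2 _] := coefM_top s2 t1.
  have [t3 _] := coefM_top t2 s4.
  by rewrite natE /=; move: t3; rewrite !add0n addnS addSn.
- case: e => [|e]; first by rewrite mul0r mulr0 size_poly0.
  have [s0 _] := C_top (e.+1%:R).
  have [s2 _] := linx_top i0 a; have [s3 _] := linx_top i1 b; have [s4 _] := linx_top i2 e.
  have [t1 _] := coefM_top s0 s4; have [t2 _] := coefM_top s2 s3.
  have [t3 _] := coefM_top t2 t1.
  by rewrite natE /=; move: t3; rewrite !add0n !addnS.
Qed.

Lemma DP_size d c j : (size (DP d c j) <= d)%N.
Proof.
rewrite /DP; apply: (big_ind (fun p : {poly R} => (size p <= d)%N)).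
- by rewrite size_poly0.
- by move=> x y hx hy; rewrite (leq_trans (size_polyD _ _)) // geq_max hx hy.
move=> [a ha] _; apply: (big_ind (fun p : {poly R} => (size p <= d)%N)).
- by rewrite size_poly0.
- by move=> x y hx hy; rewrite (leq_trans (size_polyD _ _)) // geq_max hx hy.
move=> [b hb] _ /=; simpl in hb.
have e : (a + b + (d - a - b) = d)%N by move: ha hb; lia.
rewrite (leq_trans (size_mul_leq _ _)) //.
have := dmon_size j a b (d - a - b); rewrite e.
have := size_polyC_leq1 (c a b).
case: (size (c a b)%:P) => [|[|m]] //=; lia.
Qed.


Lemma lin_deriv i : (lin i)^`() = (w i ord0)%:P.
Proof. by rewrite /lin derivD derivC derivM derivC derivX mul0r add0r mulr1 add0r. Qed.

Lemma dmonP0 a b e : dmonP i0 a b e = a%:R * lin i0 ^+ a.-1 * lin i1 ^+ b * lin i2 ^+ e.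
Proof. by rewrite /dmonP /i0 inordK. Qed.
Lemma dmonP1 a b e : dmonP i1 a b e = lin i0 ^+ a * (b%:R * lin i1 ^+ b.-1) * lin i2 ^+ e.
Proof. by rewrite /dmonP /i1 inordK. Qed.
Lemma dmonP2 a b e : dmonP i2 a b e = lin i0 ^+ a * lin i1 ^+ b * (e%:R * lin i2 ^+ e.-1).
Proof. by rewrite /dmonP /i2 inordK. Qed.

Lemma sum3P (f : 'I_3 -> {poly R}) : \sum_(j < 3) f j = f i0 + f i1 + f i2.
Proof.
rewrite !big_ord_recr big_ord0 /= add0r.
congr (f _ + f _ + f _); apply/val_inj; by rewrite /= inordK.
Qed.

Lemma HP_deriv d c : (HP d c)^`() = \sum_(j < 3) (w j ord0)%:P * DP d c j.
Proof.
rewrite /HP /DP raddf_sum.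
under [RHS]eq_bigr do rewrite mulr_sumr.
rewrite exchange_big; apply: eq_bigr => a _.
rewrite raddf_sum.
under [RHS]eq_bigr do rewrite mulr_sumr.
rewrite exchange_big; apply: eq_bigr => b _.
rewrite sum3P dmonP0 dmonP1 dmonP2.
rewrite /= !derivM !deriv_exp !lin_deriv derivC.
ring.
Qed.

End Poly.

Section Vec.
Variables (d : nat) (F : 'I_3 -> nat -> nat -> R).

Lemma lformS (r : 'rV[R]_3) v : lform r v = \sum_(i < 3) r ord0 i * v i ord0.
Proof. by rewrite /lform mxE. Qed.

Lemma Fmap_scale g v : Fmap d F (g *: v) = g ^+ d *: Fmap d F v.
Proof. by apply/matrixP => i j; rewrite !mxE heval_scale. Qed.

Lemma Jac_scale g v : g *: Jac d F (g *: v) = g ^+ d *: Jac d F v.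
Proof. by apply/matrixP => i j; rewrite !mxE mulrC hpart_scale. Qed.

Lemma Jac_euler v : Jac d F v *m v = d%:R *: Fmap d F v.
Proof.
apply/matrixP => i j; rewrite (ord1 j) !mxE sum3 !mxE -euler.
by rewrite /cX /cY /cZ; ring.
Qed.

Lemma Jac_tr v : \tr (Jac d F v) = \sum_(i < 3) hpart d (F i) i v.
Proof. by rewrite /mxtrace; apply: eq_bigr => i _; rewrite mxE. Qed.

Lemma Jac_mul v (w : 'cV[R]_3) i :
  (Jac d F v *m w) i ord0 = \sum_(j < 3) w j ord0 * hpart d (F i) j v.
Proof. by rewrite mxE; apply: eq_bigr => j _; rewrite mxE mulrC. Qed.

Variables (u w : 'cV[R]_3).

Definition polyform (r : 'rV[R]_3) : {poly R} :=
  \sum_(i < 3) (r ord0 i)%:P * HP u w d (F i).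
Definition Tp : {poly R} := \sum_(i < 3) DP u w d (F i) i.

Lemma pf_horner r x : (polyform r).[x] = lform r (Fmap d F (vx u w x)).
Proof.
rewrite /polyform horner_sum lformS; apply: eq_bigr => i _.
by rewrite hornerM hornerC HP_horner mxE.
Qed.

Lemma pf_deriv r x : (polyform r)^`().[x] = lform r (Jac d F (vx u w x) *m w).
Proof.
rewrite /polyform raddf_sum horner_sum lformS; apply: eq_bigr => i _.
rewrite /= derivM derivC mul0r add0r hornerM hornerC HP_deriv Jac_mul.
rewrite horner_sum; congr (_ * _); apply: eq_bigr => j _.
by rewrite hornerM hornerC DP_horner.
Qed.

Lemma pf_top r : (size (polyform r) <= d.+1)%N /\ (polyform r)`_d = lform r (Fmap d F w).
Proof.
split.
  rewrite /polyform; apply: (big_ind (fun p : {poly R} => (size p <= d.+1)%N)).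
  - by rewrite size_poly0.
  - by move=> x y hx hy; rewrite (leq_trans (size_polyD _ _)) // geq_max hx hy.
  move=> i _; rewrite mul_polyC (leq_trans (size_scale_leq _ _)) //.
  by case: (HP_top u w d (F i)).
rewrite /polyform coef_sum lformS; apply: eq_bigr => i _.
by rewrite coefCM mxE; case: (HP_top u w d (F i)) => _ ->.
Qed.

Lemma Tp_horner x : Tp.[x] = \tr (Jac d F (vx u w x)).
Proof. by rewrite /Tp horner_sum Jac_tr; apply: eq_bigr => i _; rewrite DP_horner. Qed.

Lemma Tp_size : (size Tp <= d)%N.
Proof.
rewrite /Tp; apply: (big_ind (fun p : {poly R} => (size p <= d)%N)).
- by rewrite size_poly0.
- by move=> x y hx hy; rewrite (leq_trans (size_polyD _ _)) // geq_max hx hy.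
by move=> i _; apply: DP_size.
Qed.

End Vec.

Section Basis.

Definition mk3 (x y z : R) : 'cV[R]_3 :=
  \col_i (if i == i0 then x else if i == i1 then y else z).
Definition mk3r (x y z : R) : 'rV[R]_3 :=
  \row_i (if i == i0 then x else if i == i1 then y else z).

Lemma i10 : (i1 == i0) = false. Proof. by rewrite -val_eqE /= !inordK. Qed.
Lemma i20 : (i2 == i0) = false. Proof. by rewrite -val_eqE /= !inordK. Qed.
Lemma i21 : (i2 == i1) = false. Proof. by rewrite -val_eqE /= !inordK. Qed.

Lemma mk3E x y z : (cX (mk3 x y z) = x) * (cY (mk3 x y z) = y) * (cZ (mk3 x y z) = z).
Proof. by rewrite /cX /cY /cZ !mxE -/i0 -/i1 -/i2 eqxx i10 i20 i21 eqxx. Qed.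
Lemma mk3rE x y z : (mk3r x y z ord0 i0 = x) * (mk3r x y z ord0 i1 = y) * (mk3r x y z ord0 i2 = z).
Proof. by rewrite !mxE eqxx i10 i20 i21 eqxx. Qed.

Definition basis_prop (a : 'rV[R]_3) (u w : 'cV[R]_3) (al be : 'rV[R]_3) :=
  [/\ lform a u = 0, lform a w = 0, lform al u = 1, lform al w = 0 &
   [/\ lform be u = 0, lform be w = 1 &
   forall v, lform a v = 0 -> v = lform al v *: u + lform be v *: w]].

Lemma basisL (a : 'rV[R]_3) : a != 0 -> exists u w al be, basis_prop a u w al be.
Proof.
move=> anz.
set a0 := a ord0 i0; set a1 := a ord0 i1; set a2 := a ord0 i2.
have : (a0 != 0) || (a1 != 0) || (a2 != 0).
  apply: contraR anz; rewrite !negb_or !negbK => /andP [/andP [/eqP h0 /eqP h1] /eqP h2].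
  apply/eqP/matrixP => i j; rewrite (ord1 i) mxE.
  by case: (ord3 j) => [->|[->|->]].
case/orP => [/orP [] | ] nz.
- exists (mk3 (- a1 / a0) 1 0), (mk3 (- a2 / a0) 0 1), (mk3r 0 1 0), (mk3r 0 0 1).
  rewrite /basis_prop !lformE !mk3E !mk3rE -/a0 -/a1 -/a2.
  split; try field => //; split; try field => //.
  move=> v; rewrite !lformE !mk3rE -/a0 -/a1 -/a2 => H.
  apply: col3P; rewrite !coordE !mk3E.
  + apply/eqP; rewrite -subr_eq0.
    have -> : cX v - (((0 * cX v + 1 * cY v + 0 * cZ v) * (- a1 / a0)) +
      (0 * cX v + 0 * cY v + 1 * cZ v) * (- a2 / a0)) =
      (a0 * cX v + a1 * cY v + a2 * cZ v) / a0 by field.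
    by rewrite H mul0r.
  + ring.
  + ring.
- exists (mk3 1 (- a0 / a1) 0), (mk3 0 (- a2 / a1) 1), (mk3r 1 0 0), (mk3r 0 0 1).
  rewrite /basis_prop !lformE !mk3E !mk3rE -/a0 -/a1 -/a2.
  split; try field => //; split; try field => //.
  move=> v; rewrite !lformE !mk3rE -/a0 -/a1 -/a2 => H.
  apply: col3P; rewrite !coordE !mk3E.
  + ring.
  + apply/eqP; rewrite -subr_eq0.
    have -> : cY v - (((1 * cX v + 0 * cY v + 0 * cZ v) * (- a0 / a1)) +
      (0 * cX v + 0 * cY v + 1 * cZ v) * (- a2 / a1)) =
      (a0 * cX v + a1 * cY v + a2 * cZ v) / a1 by field.
    by rewrite H mul0r.
  + ring.
- exists (mk3 1 0 (- a0 / a2)), (mk3 0 1 (- a1 / a2)), (mk3r 1 0 0), (mk3r 0 1 0).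
  rewrite /basis_prop !lformE !mk3E !mk3rE -/a0 -/a1 -/a2.
  split; try field => //; split; try field => //.
  move=> v; rewrite !lformE !mk3rE -/a0 -/a1 -/a2 => H.
  apply: col3P; rewrite !coordE !mk3E.
  + ring.
  + ring.
  + apply/eqP; rewrite -subr_eq0.
    have -> : cZ v - (((1 * cX v + 0 * cY v + 0 * cZ v) * (- a0 / a2)) +
      (0 * cX v + 1 * cY v + 0 * cZ v) * (- a1 / a2)) =
      (a0 * cX v + a1 * cY v + a2 * cZ v) / a2 by field.
    by rewrite H mul0r.
Qed.

Lemma lformRB (r1 r2 : 'rV[R]_3) s v : lform (r1 - s *: r2) v = lform r1 v - s * lform r2 v.
Proof. rewrite !lformE !mxE; ring. Qed.

Lemma basis_shift a u w al be s : basis_prop a u w al be ->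
  basis_prop a u (w + s *: u) (al - s *: be) be.
Proof.
case=> [au aw alu alw [beu bew dec]].
split; rewrite ?lformRB ?lformD ?lformZ ?au ?aw ?alu ?alw ?beu ?bew; try ring.
split; rewrite ?lformRB ?lformD ?lformZ ?au ?aw ?alu ?alw ?beu ?bew; try ring.
move=> v hv; rewrite {1}(dec v hv) lformRB.
apply: col3P; rewrite !coordE; ring.
Qed.

Lemma exists_nonfixed d F a u w al be k (p : 'I_k -> 'cV[R]_3) :
  basis_prop a u w al be ->
  (forall v, v != 0 -> lform a v = 0 -> is_fixed d F v ->
     exists i, proportional v (p i)) ->
  exists s : R, ~ is_fixed d F (w + s *: u).
Proof.
case=> [au aw alu alw [beu bew dec]] cover.
apply: NNPP => nex.
have allfix : forall s : R, is_fixed d F (w + s *: u).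
  by move=> s; apply: NNPP => nf; apply: nex; exists s.
have ex : forall n : 'I_k.+1, exists i, proportional (w + (n : nat)%:R *: u) (p i).
  move=> n; apply: cover; last by apply: allfix.
    apply/eqP => h; have := congr1 (lform be) h.
    by rewrite lform0 lformD lformZ bew beu mulr0 addr0; apply/eqP; rewrite oner_eq0.
  by rewrite lformD lformZ aw au mulr0 addr0.
pose f n := proj1_sig (constructive_indefinite_description _ (ex n)).
have fP : forall n : 'I_k.+1, proportional (w + (n : nat)%:R *: u) (p (f n)).
  by move=> n; rewrite /f; case: constructive_indefinite_description.
have finj : injective f.
  move=> n m e.
  have [c hc] := fP n; have [c' hc'] := fP m.
  rewrite e in hc.
  have h1 := congr1 (lform be) hc; have h2 := congr1 (lform be) hc'.
  rewrite !lformD !lformZ bew beu mulr0 addr0 in h1 h2.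
  have cc : c = c'.
    have bnz : lform be (p (f m)) != 0.
      by apply/eqP => h; move: h1; rewrite h mulr0; apply/eqP; rewrite oner_eq0.
    by apply: (mulIf bnz); rewrite -h1 -h2 mulr0 addr0.
  have := congr1 (lform al) hc; rewrite cc -hc'.
  rewrite !lformD !lformZ alw alu !mulr1 !add0r => /eqP.
  by rewrite eqr_nat => /eqP nm; apply/val_inj.
have := leq_card f finj; rewrite !card_ord ltnn.
by [].
Qed.

Lemma coef2_cubic (x y z : R) :
  (('X - x%:P) * ('X - y%:P) * ('X - z%:P))`_2 = - (x + y + z).
Proof.
have -> : ('X - x%:P) * ('X - y%:P) * ('X - z%:P) =
  'X ^+ 3 - (x + y + z)%:P * 'X ^+ 2 + (x * y + y * z + z * x)%:P * 'X - (x * y * z)%:P.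
  by rewrite !polyCD !polyCM; ring.
rewrite !coefD !coefN !coefCM coefC coefX -!/('X^_) !coefXn /=.
rewrite !mulr0 !mulr1; ring.
Qed.

Lemma local_data d F a u w al be (p : 'cV[R]_3) lam mu :
  line_invariant d F a -> basis_prop a u w al be -> ~ is_fixed d F w ->
  p != 0 -> lform a p = 0 -> Df_eigenvalues d F a p lam mu -> lam != 1 ->
  let g1 := polyform d F u w al in let g2 := polyform d F u w be in
  let phi := g2 - 'X * g1 in
  let r := lform be p / lform al p in
  [/\ lform al p != 0, root phi r, phi^`().[r] != 0 &
      (1 - mu) / (1 - lam) =
        -1 - ((d.+2)%:R * g1.[r] - (Tp d F u w).[r]) / phi^`().[r]].
Proof.
move=> linv [au aw alu alw [beu bew dec]] nfw pnz ap [c [cnz [Fp H]]] l1.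
move: H => /= [cp [om [aom [nprop [t Mom]]]]].
set g1 := polyform d F u w al; set g2 := polyform d F u w be.
set phi := g2 - 'X * g1; set r := lform be p / lform al p.
set g := lform al p; set bt := lform be p.
have gnz : g != 0.
  apply/eqP => g0.
  have pE : p = bt *: w by rewrite {1}(dec p ap) -/g g0 scale0r add0r.
  have bnz : bt != 0 by apply: contraNneq pnz => b0; rewrite pE b0 scale0r.
  apply: nfw; exists (c * bt / bt ^+ d).
  apply: (scalerI (expf_neq0 d bnz)).
  rewrite -Fmap_scale -pE Fp {1}pE !scalerA; congr (_ *: _).
  by field; rewrite expf_neq0.
set vr := vx u w r.
have alvr : lform al vr = 1 by rewrite /vr /vx lformD lformZ alu alw mulr0 addr0.
have bevr : lform be vr = r by rewrite /vr /vx lformD lformZ beu bew mulr1 add0r.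
have pE : p = g *: vr.
  rewrite {1}(dec p ap) -/g -/bt /vr /vx.
  by apply: col3P; rewrite !coordE /r -/g -/bt; field.
have gdnz : g ^+ d != 0 by rewrite expf_neq0.
set c' := c * g / g ^+ d.
have c'nz : c' != 0 by rewrite /c' mulf_neq0 ?invr_eq0 // mulf_neq0.
have Fvr : Fmap d F vr = c' *: vr.
  apply: (scalerI gdnz); rewrite -Fmap_scale -pE Fp {1}pE !scalerA; congr (_ *: _).
  by rewrite /c'; field.
have g1r : g1.[r] = c' by rewrite /g1 pf_horner -/vr Fvr lformZ alvr mulr1.
have g2r : g2.[r] = c' * r by rewrite /g2 pf_horner -/vr Fvr lformZ bevr.
have rootr : root phi r by rewrite /root /phi !hornerE g1r g2r; apply/eqP; ring.
have JacE : Jac d F p = (g ^+ d / g) *: Jac d F vr.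
  apply: (scalerI gnz); rewrite pE Jac_scale !scalerA; congr (_ *: _); by field.
have ME : c^-1 *: Jac d F p = c'^-1 *: Jac d F vr.
  by rewrite JacE scalerA; congr (_ *: _); rewrite /c'; field; rewrite gdnz gnz cnz.
rewrite ME in cp Mom.
have Mvr : c'^-1 *: Jac d F vr *m vr = d%:R *: vr.
  by rewrite -scalemxAl Jac_euler Fvr !scalerA; congr (_ *: _); field.
set M := c'^-1 *: Jac d F vr in cp Mom Mvr.
set ao := lform al om; set bo := lform be om.
set s0 := bo - ao * r.
have omE : om = ao *: vr + s0 *: w.
  rewrite {1}(dec om aom) -/ao -/bo /vr /vx /s0; apply: col3P; rewrite !coordE; ring.
have s0nz : s0 != 0.
  apply/eqP => s00; apply: nprop; exists (ao / g).
  by rewrite omE s00 scale0r addr0 pE scalerA mulfVK.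
have Mom2 : M *m om = (ao * d%:R) *: vr + s0 *: (M *m w).
  by rewrite {1}omE mulmxDr -!scalemxAr Mvr scalerA.
set A := lform al (M *m w); set B := lform be (M *m w).
have E1 : ao * d%:R + s0 * A = lam * ao + t * g.
  have := congr1 (lform al) Mom; rewrite Mom2 !lformD !lformZ alvr -/A -/ao -/g.
  by rewrite mulr1.
have E2 : ao * d%:R * r + s0 * B = lam * bo + t * bt.
  have := congr1 (lform be) Mom; rewrite Mom2 !lformD !lformZ bevr -/B -/bo -/bt.
  by [].
have btE : bt = g * r by rewrite /r -/g -/bt mulrC divfK.
have BE : B = lam + r * A.
  have : s0 * (B - lam - r * A) = 0.
    transitivity ((ao * d%:R * r + s0 * B - (lam * bo + t * bt)) -
       r * (ao * d%:R + s0 * A - (lam * ao + t * g))).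
      by rewrite /s0 btE; ring.
    by rewrite E1 E2 !subrr mulr0 subr0.
  move/eqP; rewrite mulf_eq0 (negbTE s0nz) /= => /eqP h.
  by apply/eqP; rewrite -subr_eq0 -h; apply/eqP; ring.
have AE : A = c'^-1 * (g1^`()).[r].
  by rewrite /A /g1 pf_deriv -/vr /M -scalemxAl lformZ.
have BE' : B = c'^-1 * (g2^`()).[r].
  by rewrite /B /g2 pf_deriv -/vr /M -scalemxAl lformZ.
have dphi : phi^`().[r] = c' * (lam - 1).
  rewrite /phi derivB derivM derivX !hornerE g1r.
  have h1 : (g2^`()).[r] = c' * B by rewrite BE' mulrA mulfV // mul1r.
  have h2 : (g1^`()).[r] = c' * A by rewrite AE mulrA mulfV // mul1r.
  rewrite h1 h2 BE; ring.
have dnz : phi^`().[r] != 0.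
  by rewrite dphi mulf_neq0 // subr_eq0.
split => //.
have trE : \tr M = d%:R + lam + mu.
  have := char_poly_trace M (isT : (0 < 3)%N); rewrite cp coef2_cubic.
  by move/eqP; rewrite eqr_opp => /eqP <-.
have Tr : (Tp d F u w).[r] = c' * (d%:R + lam + mu).
  by rewrite Tp_horner -/vr -trE /M mxtraceZ mulrA mulfV // mul1r.
rewrite Tr g1r dphi.
have l1' : lam - 1 != 0 by rewrite subr_eq0.
have l1'' : 1 - lam != 0 by rewrite subr_eq0 eq_sym.
have -> : (d.+2)%:R = d%:R + 2 :> R by rewrite -addn2 natrD.
by field; rewrite l1' l1'' c'nz.
Qed.

Lemma gt_size' (p : {poly R}) n : p`_n != 0 -> (n < size p)%N.
Proof. by apply: contraR; rewrite -leqNgt => h; rewrite nth_default. Qed.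

Lemma pvx a u w al be (p : 'cV[R]_3) : basis_prop a u w al be -> lform a p = 0 ->
  lform al p != 0 -> p = lform al p *: vx u w (lform be p / lform al p).
Proof.
case=> [_ _ _ _ [_ _ dec]] ap gnz.
rewrite {1}(dec p ap) /vx; apply: col3P; rewrite !coordE; by field.
Qed.

Arguments basisL [a].
Arguments exists_nonfixed [d F a u w al be k p].
Arguments basis_shift [a u w al be].
Arguments local_data [d F a u w al be p lam mu].
Arguments pvx [a u w al be p].

Lemma main_aux (d : nat)
    (F : 'I_3 -> nat -> nat -> R) (a : 'rV[R]_3)
    (k : nat) (p : 'I_k -> 'cV[R]_3) (lam mu : 'I_k -> R) :
  holo_map d F ->
  a != 0 ->
  line_invariant d F a ->
  (forall i, p i != 0 /\ lform a (p i) = 0 /\ is_fixed d F (p i)) ->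
  (forall i j, proportional (p i) (p j) -> i = j) ->
  (forall v, v != 0 -> lform a v = 0 -> is_fixed d F v ->
     exists i, proportional v (p i)) ->
  (forall i, Df_eigenvalues d F a (p i) (lam i) (mu i)) ->
  (forall i, lam i != 1) ->
  \sum_(i < k) (1 - mu i) / (1 - lam i) = 1.
Proof.
move=> holo anz linv fixp dist cover eig simple.
have [u [w0 [al0 [be bp0]]]] := basisL anz.
have [s ns] := exists_nonfixed bp0 cover.
have bp := basis_shift s bp0.
set w := w0 + s *: u in ns bp; set al := al0 - s *: be in bp.
have [au aw alu alw [beu bew dec]] := bp.
set g1 := polyform d F u w al; set g2 := polyform d F u w be.
set phi := g2 - 'X * g1.
set P := (d.+2)%:R%:P * g1 - Tp d F u w.
pose r i := lform be (p i) / lform al (p i).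
have loc : forall i, [/\ lform al (p i) != 0, root phi (r i), phi^`().[r i] != 0 &
      (1 - mu i) / (1 - lam i) = -1 - P.[r i] / phi^`().[r i]].
  move=> i; have [pnz [ap _]] := fixp i.
  have := local_data linv bp ns pnz ap (eig i) (simple i).
  by move=> /= [h1 h2 h3 h4]; split => //; rewrite h4 /P !hornerE.
have wnz : w != 0.
  by apply/eqP => h; move: bew; rewrite h lform0; apply/eqP; rewrite eq_sym oner_eq0.
have [sg1 cg1] := pf_top d F u w al.
have [sg2 cg2] := pf_top d F u w be.
have g1d : g1`_d != 0.
  rewrite /g1 cg1; apply/eqP => h; apply: ns.
  have aF : lform a (Fmap d F w) = 0 by apply: linv.
  exists (lform be (Fmap d F w)).
  by rewrite {1}(dec _ aF) h scale0r add0r.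
have phitop : phi`_d.+1 = - g1`_d.
  by rewrite /phi coefB coefXM /= [g2`__]nth_default // sub0r.
have sphi : size phi = d.+2.
  apply/anti_leq/andP; split; last first.
    by apply: gt_size'; rewrite phitop oppr_eq0.
  rewrite /phi (leq_trans (size_polyD _ _)) // geq_max size_polyN.
  rewrite (leq_trans sg2) //=.
  by rewrite (leq_trans (size_mul_leq _ _)) // size_polyX /= ltnS.
have sP : (size P <= d.+1)%N.
  rewrite /P (leq_trans (size_polyD _ _)) // geq_max size_polyN.
  rewrite (leq_trans (Tp_size d F u w)) // andbT.
  rewrite (leq_trans (size_mul_leq _ _)) //.
  have := size_polyC_leq1 ((d.+2)%:R : R).
  case: (size _) => [|[|]] //= _.
  by rewrite add0n (leq_trans (leq_pred _) sg1).
have rinj : injective r.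
  move=> i j e.
  have [gi _ _ _] := loc i; have [gj _ _ _] := loc j.
  have [_ [api _]] := fixp i; have [_ [apj _]] := fixp j.
  apply: dist; exists (lform al (p i) / lform al (p j)).
  have ei := pvx bp api gi; have ej := pvx bp apj gj.
  rewrite -/(r i) -/(r j) e in ei ej.
  set ci := lform al (p i) in gi ei *; set cj := lform al (p j) in gj ej *.
  by rewrite ei ej scalerA divfK.
have roots : forall z, root phi z -> exists i, z = r i.
  move=> z /eqP rz.
  have alz : lform al (vx u w z) = 1 by rewrite /vx lformD lformZ alu alw mulr0 addr0.
  have bez : lform be (vx u w z) = z by rewrite /vx lformD lformZ beu bew mulr1 add0r.
  have aZ : lform a (vx u w z) = 0 by rewrite /vx lformD lformZ au aw mulr0 addr0.
  have vnz : vx u w z != 0.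
    by apply/eqP => h; move: alz; rewrite h lform0; apply/eqP; rewrite eq_sym oner_eq0.
  have aF : lform a (Fmap d F (vx u w z)) = 0 by apply: linv.
  have fz : is_fixed d F (vx u w z).
    exists g1.[z].
    have e2 : g2.[z] = z * g1.[z].
      by apply/eqP; rewrite -subr_eq0; move: rz; rewrite /phi !hornerE => ->.
    rewrite {1}(dec _ aF) -!pf_horner -/g1 -/g2 e2 /vx.
    by apply: col3P; rewrite !coordE; ring.
  have [i [dl hi]] := cover _ vnz aZ fz.
  exists i; rewrite /r.
  have h1 := congr1 (lform al) hi; have h2 := congr1 (lform be) hi.
  rewrite lformZ alz in h1; rewrite lformZ bez in h2.
  have [gi _ _ _] := loc i.
  have dlE : dl = (lform al (p i))^-1 by apply: (mulIf gi); rewrite mulVf // -h1.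
  by rewrite h2 dlE mulrC.
have [kE sumE] := lagrange sphi rinj roots (fun i => let: And4 _ h _ _ := loc i in h)
   (fun i => let: And4 _ _ h _ := loc i in h) sP.
under eq_bigr do rewrite (let: And4 _ _ _ h := loc _ in h).
rewrite sumrB sumr_const card_ord sumE kE /P coefB coefCM.
rewrite [(Tp d F u w)`_d]nth_default ?Tp_size // subr0 phitop.
rewrite (_ : (-1) *+ d.+1 = - (d.+1)%:R :> R); last by rewrite mulNrn.
have e1 : (d.+1)%:R = d%:R + 1 :> R by rewrite -addn1 natrD.
have e2 : (d.+2)%:R = d%:R + 2 :> R by rewrite -addn2 natrD.
rewrite e1 e2.
by field; rewrite ?oppr_eq0 ?g1d.
Qed.

End Basis.

End S.

Theorem mainTheorem5 (R : numClosedFieldType) (d : nat)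
    (F : 'I_3 -> nat -> nat -> R) (a : 'rV[R]_3)
    (k : nat) (p : 'I_k -> 'cV[R]_3) (lam mu : 'I_k -> R) :
  holo_map d F ->
  a != 0 ->
  line_invariant d F a ->
  (* p_1, ..., p_k are fixed points of f|_l ... *)
  (forall i, p i != 0 /\ lform a (p i) = 0 /\ is_fixed d F (p i)) ->
  (* ... pairwise distinct ... *)
  (forall i j, proportional (p i) (p j) -> i = j) ->
  (* ... and they are all the fixed points of f|_l *)
  (forall v, v != 0 -> lform a v = 0 -> is_fixed d F v ->
     exists i, proportional v (p i)) ->
  (* lam i, mu i: eigenvalues of Df at p i, lam i tangent to l *)
  (forall i, Df_eigenvalues d F a (p i) (lam i) (mu i)) ->
  (* all fixed points of f|_l are simple *)
  (forall i, lam i != 1) ->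
  \sum_(i < k) (1 - mu i) / (1 - lam i) = 1.
Proof. exact: main_aux. Qed.
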